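(* Fix an integer $m\ge 1$ and $n\ge 0$. Let $\pi\in\Pi^{(m)}_n$ with label $L(\pi)=(a_1,a_2,\dots,a_m)$. Then exactly $a_m$ partitions of $[n+1]$ lying in $\Pi^{(m)}_{n+1}$ are obtained from $\pi$ by either adding $n+1$ as a singleton block or adding $n+1$ to an existing block of $\pi$: namely the partition obtained by adding $\{n+1\}$ as a singleton, and, for each $1\le l\le a_m-1$, the partition obtained by adding $n+1$ to block $l$ of $\pi$. Their labels are: \begin{itemize} \item adding $n+1$ as a singleton: $(a_1+1,a_2+1,\dots,a_m+1)$; \item adding $n+1$ to block $l$ with $1\le l\le a_1-1$: $(l+1,a_2,a_3,\dots,a_m)$; \item adding $n+1$ to block $l$ with $a_{j-1}\le l\le a_j-1$ for some $2\le j\le m$: $(a_1+1,\dots,a_{j-1}+1,\,l+1,\,a_{j+1},\dots,a_m)$. \end{itemize} (In particular, block $a_1$ gives $(a_1+1,a_1+1,a_3,\dots,a_m)$, block $a_2$ gives $(a_1+1,a_2+1,a_2+1,a_4,\dots,a_m)$, and block $a_m-1$ gives $(a_1+1,\dots,a_{m-1}+1,a_m)$.)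
   Context: A set partition of $[n]=\{1,\dots,n\}$ is a collection of nonempty pairwise disjoint blocks with union $[n]$ ($n=0$ gives the empty partition). Its standard representation is the graph on vertex set $[n]$ whose edges (arcs) $(i,j)$, $i<j$, join consecutive elements (in numerical order) of each block. An $m$-nesting is a set of $m$ arcs $(i_1,j_1),\dots,(i_m,j_m)$ with $i_1<i_2<\dots<i_m<j_m<j_{m-1}<\dots<j_1$ (a $1$-nesting is a single arc); a partition is $m$-nonnesting if it has no $m$-nesting. $\Pi^{(m)}_n$ denotes the set of partitions of $[n]$ with no $(m+1)$-nesting. The blocks of a partition are numbered $1,2,3,\dots$ in decreasing order of their maximal elements (block 1 contains the largest element). ''Adding $n+1$ to block $l$'' means forming the partition of $[n+1]$ in which block $l$ is replaced by block $l\cup\{n+1\}$. The label of $\pi\in\Pi^{(m)}_n$ is $L(\pi)=(a_1,\dots,a_m)$ where, for $1\le j\le m$, $a_j=1+$(number of blocks of $\pi$) if $\pi$ has no $j$-nesting, and otherwise $a_j=1+$(number of blocks whose maximal element lies to the right of (is greater than) the smallest vertex of the rightmost $j$-nesting), the rightmost $j$-nesting being one whose smallest vertex is as large as possible among all $j$-nestings of $\pi$. The empty partition has label $(1,\dots,1)$. *)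

(* Defs.v *)
(* Vertex i : 'I_n represents the integer i+1 of [n]. *)
From mathcomp Require Import all_boot all_order.
Set Implicit Arguments. Unset Strict Implicit. Unset Printing Implicit Defensive.

Section SetPartitions.
Variable n : nat.
Implicit Types (P : {set {set 'I_n}}) (B : {set 'I_n}).

Definition setpart P : bool := partition P [set: 'I_n].

Definition arcb P (a : 'I_n * 'I_n) : bool :=
  (a.1 < a.2) &&
  [exists B in P, [&& a.1 \in B, a.2 \in B &
                     [forall k in B, ~~ ((a.1 < k) && (k < a.2))]]].

Definition nestrel (a b : 'I_n * 'I_n) : bool := (a.1 < b.1) && (b.2 < a.2).

Definition nestingb P (s : seq ('I_n * 'I_n)) : bool :=
  all (arcb P) s && sorted nestrel s.

Definition has_nesting P (j : nat) : bool :=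
  [exists t : j.-tuple ('I_n * 'I_n), nestingb P t].

Definition nest_start P (j : nat) (i : 'I_n) : bool :=
  [exists t : j.-tuple ('I_n * 'I_n), nestingb P t && ((head (i, i) t).1 == i)].

Definition maxB B : nat := \max_(i in B) (i : nat).

Definition PiM (m : nat) P : bool := setpart P && ~~ has_nesting P m.+1.

Definition lab P (j : nat) : nat :=
  if has_nesting P j then
    let s := \max_(i : 'I_n | nest_start P j i) (i : nat) in
    1 + #|[set B in P | s < maxB B]|
  else 1 + #|P|.

Definition label (m : nat) P : seq nat := [seq lab P j | j <- iota 1 m].

(* blocks numbered 1,2,... by decreasing maximal element *)
Definition blockrank P B : nat := #|[set C in P | maxB B <= maxB C]|.

Definition liftB B : {set 'I_n.+1} := widen_ord (leqnSn n) @: B.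

Definition add_single P : {set {set 'I_n.+1}} :=
  [set (@ord_max n)] |: [set liftB B | B in P].

Definition add_to P (l : nat) : {set {set 'I_n.+1}} :=
  [set (if blockrank P B == l then (@ord_max n) |: liftB B else liftB B) | B in P].

Definition children P : {set {set {set 'I_n.+1}}} :=
  add_single P |: [set add_to P l | l : 'I_n.+1 & (1 <= l) && (l <= #|P|)].

End SetPartitions.

(* Main.v *)
Require Import Defs.
From mathcomp Require Import all_boot all_order.
From mathcomp Require Import zify.
Set Implicit Arguments. Unset Strict Implicit. Unset Printing Implicit Defensive.

Definition nrel (x y : nat * nat) : bool := (x.1 < y.1) && (y.2 < x.2).

Lemma nrel_trans : transitive nrel.
Proof. move=> y x z /andP[h1 h2] /andP[h3 h4]; apply/andP; split; lia. Qed.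

Definition isStart (A : pred (nat * nat)) (j x : nat) : Prop :=
  exists s : seq (nat * nat),
    [/\ size s = j, all A s, sorted nrel s & (head (0,0) s).1 = x].

Lemma start_behead A j x : 1 < j -> isStart A j x ->
  exists2 y, x < y & isStart A j.-1 y.
Proof.
move=> hj [[|h [|h' t]] [/= hs hA hso hx]]; subst; try by [].
move: hA hso => /= /and3P[_ hh' ht] /andP[/andP[h1 _] hp].
exists h'.1 => //; exists (h' :: t); split => //=.
  by rewrite hh'.
Qed.

Lemma start_ext (A A' : pred (nat * nat)) b c j x :
  (forall y, A y -> y.2 < c) ->
  (forall y, A' y = A y || (y == (b, c))) -> 0 < j ->
  isStart A' j x <->
  isStart A j x \/ (x = b /\ (j = 1 \/ exists2 y, b < y & isStart A j.-1 y)).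
Proof.
move=> hA hA' hj; split.
- move=> [s [hs hall hso hx]].
  case: s hs hall hso hx => [|h t] /= hs; first by move: hj; rewrite -hs.
  move=> /andP[hh ht] hso hx.
  have hpath := hso.
  have hmin := order_path_min nrel_trans hso.
  have hh2 : h.2 <= c.
    move: hh; rewrite hA' => /orP[/hA|/eqP->] /=; lia.
  have htA : all A t.
    apply/allP => y yt; move/allP: ht => /(_ y yt); rewrite hA' => /orP[//|/eqP ey].
    move/allP: hmin => /(_ y yt) /andP[_]; rewrite ey /=; lia.
  move: hh; rewrite hA' => /orP[hhA|/eqP eh].
    left; exists (h :: t); split => //=; by rewrite hhA htA.
  right; split; first by rewrite -hx eh.
  clear hso ht.
  case: t hs hpath htA hmin => [|h' t'] /= hs hpath htA hmin.
    by left.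
  right; exists h'.1.
    by move: hpath => /andP[/andP[] + _]; rewrite eh.
  exists (h' :: t'); split => //; first by rewrite -hs.
  by move: hpath => /andP[].

- move=> [[s [hs hall hso hx]]|[-> [j1|[y hy [s [hs hall hso hx]]]]]].
  + exists s; split => //; apply/allP => y ys; rewrite hA'; by rewrite (allP hall y ys).
  + by exists [:: (b, c)]; split => //=; rewrite hA' eqxx orbT.
  + exists ((b, c) :: s); split => //=.
    * by rewrite hs; lia.
    * rewrite hA' eqxx orbT /=; apply/allP => z zs; by rewrite hA' (allP hall z zs).
    * case: s hs hall hso hx => [|h t] /= hs; first by lia.
      move=> /andP[hh _] hso hx; rewrite hso andbT /nrel /= hx hy /=; exact: hA.
Qed.

Definition LabR (A : pred (nat * nat)) (cnt : nat -> nat) (tot j v : nat) : Prop :=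
  (exists x, [/\ isStart A j x, (forall y, isStart A j y -> y <= x) & v = 1 + cnt x])
  \/ ((forall x, ~ isStart A j x) /\ v = 1 + tot).

Lemma LabR_uniq A cnt tot j v w : LabR A cnt tot j v -> LabR A cnt tot j w -> v = w.
Proof.
move=> [[x [hx hmx ->]]|[hn ->]] [[y [hy hmy ->]]|[hn' ->]] //.
- by have -> : x = y by apply/eqP; rewrite eqn_leq hmx // hmy.
- by case: (hn' x).
- by case: (hn y).
Qed.

Lemma start_prop (A : pred (nat * nat)) j x (Q : nat -> Prop) : 0 < j -> (forall y, A y -> Q y.1) ->
  isStart A j x -> Q x.
Proof.
move=> hj hQ [[|h t] [/= hs hall _ <-]]; first by move: hj; rewrite -hs.
by apply: hQ; case/andP: hall.
Qed.

Section Ext.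
Variables (A A' : pred (nat * nat)) (cnt cnt' : nat -> nat) (tot b c l : nat).
Hypothesis hA : forall y, A y -> y.1 < y.2 < c.
Hypothesis hAb : forall y, A y -> y.1 != b.
Hypothesis hA' : forall y, A' y = A y || (y == (b, c)).
Hypothesis hbc : b < c.
Hypothesis hcnt' : forall x, x < c -> cnt' x = cnt x + (b <= x).
Hypothesis hl : forall x, (l <= cnt x) = (x < b).
Hypothesis hcb : cnt b = l.-1.
Hypothesis hl0 : 0 < l.
Hypothesis hlt : l <= tot.

Lemma hA2 : forall y, A y -> y.2 < c.
Proof. by move=> y /hA /andP[]. Qed.

Lemma sA j x : 0 < j -> isStart A j x -> x < c /\ x != b.
Proof.
move=> hj hx; split.
- apply: (start_prop (Q := fun x => x < c)) hj _ hx => y /hA; lia.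
- exact: (start_prop (Q := fun x => x != b)) hj hAb hx.
Qed.

Lemma labR_ext j aj aj1 :
  0 < j ->
  LabR A cnt tot j aj ->
  (1 < j -> LabR A cnt tot j.-1 aj1) ->
  LabR A' cnt' tot j
    (if aj <= l then aj.+1 else if (j == 1) || (aj1 <= l) then l.+1 else aj).
Proof.
move=> hj hLj hLj1.
have SE := fun x => start_ext x hA2 hA' hj.
have cb : cnt' b = l by rewrite hcnt' // leqnn hcb; lia.
have Wb : (j = 1 \/ exists2 y, b < y & isStart A j.-1 y) ->
          (forall y, isStart A j y -> y < b) -> LabR A' cnt' tot j l.+1.
  move=> hE hlt'; left; exists b; split.
  - by apply/SE; right.
  - move=> y /SE [/hlt'|[->]] //; lia.
  - by rewrite cb.
case: hLj => [[x [hx hmx ->]]|[hn ->]].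
- have [xc xb] := sA hj hx.
  case: (ltngtP x b) => hxb; last by rewrite hxb eqxx in xb.
  + have -> : (1 + cnt x <= l) = false.
      by apply/negbTE; move: (hl x); rewrite hxb; lia.
    case: (eqVneq j 1) => [e1|n1] /=.
    * apply: Wb; first by left.
      move=> y /hmx; lia.
    * have j1 : 1 < j by lia.
      case: (hLj1 j1) => [[y0 [hy0 hmy0 ->]]|[hn _]]; last first.
        by case: (start_behead j1 hx) => y _ /hn.
      have [y0c y0b] := sA (ltac:(lia) : 0 < j.-1) hy0.
      case: (ltngtP y0 b) => hyb; last by rewrite hyb eqxx in y0b.
      -- have -> : (1 + cnt y0 <= l) = false.
           by apply/negbTE; move: (hl y0); rewrite hyb; lia.
         left; exists x; split.
         ++ by apply/SE; left.
         ++ move=> y /SE [/hmx //|[_ [|[y' hy' /hmy0]]]]; lia.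
         ++ rewrite hcnt' //; have -> : (b <= x) = false by lia. by rewrite addn0.
      -- have -> : (1 + cnt y0 <= l).
           by move: (hl y0); rewrite ltnNge (ltnW hyb) /=; lia.
         apply: Wb; first by right; exists y0.
         move=> y /hmx; lia.
  + have -> : (1 + cnt x <= l).
      by move: (hl x); rewrite ltnNge (ltnW hxb) /=; lia.
    left; exists x; split.
    * by apply/SE; left.
    * move=> y /SE [/hmx //|[-> _]]; lia.
    * rewrite hcnt' // (ltnW hxb); lia.
- have -> : (1 + tot <= l) = false by lia.
  case: (eqVneq j 1) => [e1|n1] /=.
  + apply: Wb; first by left.
    by move=> y /hn.
  + have j1 : 1 < j by lia.
    case: (hLj1 j1) => [[y0 [hy0 hmy0 ->]]|[hn' ->]].
    * have [y0c y0b] := sA (ltac:(lia) : 0 < j.-1) hy0.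
      case: (ltngtP y0 b) => hyb; last by rewrite hyb eqxx in y0b.
      -- have -> : (1 + cnt y0 <= l) = false.
           by apply/negbTE; move: (hl y0); rewrite hyb; lia.
         right; split => // y /SE [/hn //|[_ [|[y' hy' /hmy0]]]]; lia.
      -- have -> : (1 + cnt y0 <= l).
           by move: (hl y0); rewrite ltnNge (ltnW hyb) /=; lia.
         apply: Wb; first by right; exists y0.
         by move=> y /hn.
    * have -> : (1 + tot <= l) = false by lia.
      right; split => // y /SE [/hn //|[_ [|[y' hy' /hn']]]] //; lia.
Qed.

Lemma ext_has m am :
  0 < m -> (forall x, ~ isStart A m.+1 x) -> LabR A cnt tot m am ->
  (exists x, isStart A' m.+1 x) <-> am <= l.
Proof.
move=> hm hn hL.
have SE := fun x => start_ext x hA2 hA' (ltn0Sn m).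
split.
- move=> [x /SE [/hn //|[_ [e|[y hy hs]]]]]; first by lia.
  case: hL => [[x0 [hx0 hmx ->]]|[hn' _]]; last by case: (hn' y).
  have := hmx _ hs; have [_ x0b] := sA hm hx0.
  move=> h2; have hb : b < x0 by lia.
  by move: (hl x0); rewrite ltnNge (ltnW hb) /=; lia.
- case: hL => [[x0 [hx0 hmx ->]]|[hn' ->]]; last by lia.
  move=> hle; exists b; apply/SE; right; split => //; right; exists x0 => //.
  have [_ x0b] := sA hm hx0.
  move: (hl x0).
  have -> : (l <= cnt x0) = false by lia.
  move/esym/negbT; rewrite -leqNgt leq_eqVlt eq_sym (negbTE x0b) //.
Qed.

End Ext.

Lemma labR_single (A : pred (nat*nat)) (cnt cnt' : nat -> nat) tot c j aj :
  (forall y, A y -> y.1 < y.2 < c) ->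
  (forall x, x < c -> cnt' x = (cnt x).+1) -> 0 < j ->
  LabR A cnt tot j aj -> LabR A cnt' tot.+1 j aj.+1.
Proof.
move=> hA hc hj [[x [hx hmx ->]]|[hn ->]]; last by right.
left; exists x; split => //.
rewrite hc //; apply: (start_prop (Q := fun x => x < c)) hj _ hx => y /hA; lia.
Qed.

Lemma labR_mono (A : pred (nat*nat)) (cnt : nat -> nat) tot j aj aj1 :
  (forall x y, x <= y -> cnt y <= cnt x) -> (forall x, cnt x <= tot) ->
  1 < j -> LabR A cnt tot j aj -> LabR A cnt tot j.-1 aj1 -> aj1 <= aj.
Proof.
move=> hmon htot hj [[x [hx hmx ->]]|[hn ->]] hL1.
- have [y hy hs] := start_behead hj hx.
  case: hL1 => [[y0 [hy0 hmy0 ->]]|[hn _]]; last by case: (hn y).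
  have := hmon x y0; have := hmy0 _ hs; lia.
- case: hL1 => [[y0 [_ _ ->]]|[_ ->]] //; have := htot y0; lia.
Qed.

Section Conv.
Variable k : nat.
Implicit Types P : {set {set 'I_k}}.

Definition fN (a : 'I_k * 'I_k) : nat * nat := (val a.1, val a.2).
Definition arcN P : pred (nat * nat) := fun x => [exists a, arcb P a && (fN a == x)].
Definition cnt P x := #|[set B in P | x < maxB B]|.

Lemma arcN_lt P y : arcN P y -> y.1 < y.2 < k.
Proof.
rewrite /arcN => /existsP[[u v] /andP[/andP[/= huv _] /eqP <-]] /=.
by rewrite huv ltn_ord.
Qed.

Lemma pull P s : all (arcN P) s ->
  exists t : seq ('I_k * 'I_k), map fN t = s /\ all (arcb P) t.
Proof.
elim: s => [|x s IH] /=; first by exists [::].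
move=> /andP[]; rewrite {1}/arcN => /existsP[a /andP[ha /eqP hx]] /IH[t [ht hall]].
by exists (a :: t); rewrite /= ht hx ha hall.
Qed.

Lemma sortedN (t : seq ('I_k * 'I_k)) : sorted nrel (map fN t) = sorted (@nestrel k) t.
Proof. by rewrite sorted_map. Qed.

Lemma allN P (t : seq ('I_k * 'I_k)) : all (arcb P) t -> all (arcN P) (map fN t).
Proof.
move=> /allP h; apply/allP => x /mapP[a at_ ->]; rewrite /arcN; apply/existsP; exists a.
by rewrite (h a at_) eqxx.
Qed.

Lemma has_nestingP P j : 0 < j ->
  reflect (exists x, isStart (arcN P) j x) (has_nesting P j).
Proof.
move=> hj; apply: (iffP existsP).
- move=> [t /andP[ha hs]]; exists (head (0,0) (map fN t)).1.
  exists (map fN t); split => //; first by rewrite size_map size_tuple.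
  + exact: allN.
  + by rewrite sortedN.
- move=> [x [s [hs hall hso _]]].
  have [t [ht hat]] := pull hall.
  have st : size t == j by rewrite -hs -ht size_map.
  exists (Tuple st); rewrite /nestingb /= hat -sortedN ht //.
Qed.

Lemma nest_startP P j (i : 'I_k) : 0 < j ->
  reflect (isStart (arcN P) j i) (nest_start P j i).
Proof.
move=> hj; apply: (iffP existsP).
- move=> [t /andP[/andP[ha hs] /eqP hi]]; exists (map fN t); split => //.
  + by rewrite size_map size_tuple.
  + exact: allN.
  + by rewrite sortedN.
  + case: t ha hs hi => [[|a t] /= st] //; first by move: hj; rewrite -(eqP st).
    by move=> _ _ ->.
- move=> [s [hs hall hso hx]].
  have [t [ht hat]] := pull hall.
  have st : size t == j by rewrite -hs -ht size_map.
  exists (Tuple st); rewrite /nestingb /= hat -sortedN ht hso /=.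
  case: t ht {hat st} => [|a t] /= ht; first by move: hj; rewrite -hs -ht.
  move: hx; rewrite -ht /= => hx; apply/eqP/val_inj; exact: hx.
Qed.

Lemma start_ltk P j x : 0 < j -> isStart (arcN P) j x -> x < k.
Proof.
move=> hj; apply: (start_prop (Q := fun x => x < k)) hj _ => y /arcN_lt; lia.
Qed.

Lemma labP P j : 0 < j -> LabR (arcN P) (cnt P) #|P| j (lab P j).
Proof.
move=> hj; rewrite /lab; case: (has_nestingP P hj) => [[x0 hx0]|hn]; last first.
  by right; split => // x hx; apply: hn; exists x.
left.
have hx0k := start_ltk hj hx0.
have hc : 0 < #|(fun i : 'I_k => nest_start P j i)|.
  apply/card_gt0P; exists (Ordinal hx0k); rewrite unfold_in; exact/nest_startP.
have [i0 hi0 heq] := eq_bigmax_cond (fun i : 'I_k => (i : nat)) hc.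
exists i0; split.
- by apply/nest_startP => //; move: hi0; rewrite unfold_in.
- move=> y hy; have yk := start_ltk hj hy.
  rewrite -heq; apply: (@leq_bigmax_cond _ _ (fun i : 'I_k => (i:nat)) (Ordinal yk)).
  exact/nest_startP.
- by rewrite heq.
Qed.

End Conv.

Section Part.
Variable n : nat.
Variable P : {set {set 'I_n}}.
Hypothesis hP : setpart P.

Lemma P_cover : cover P = [set: 'I_n].
Proof. by move: hP => /and3P[/eqP]. Qed.
Lemma P_triv : trivIset P.
Proof. by move: hP => /and3P[]. Qed.
Lemma P_nz : set0 \notin P.
Proof. by move: hP => /and3P[]. Qed.

Lemma leq_maxB (B : {set 'I_n}) i : i \in B -> i <= maxB B.
Proof. by move=> hi; apply: (@leq_bigmax_cond _ (fun i => i \in B) (fun i : 'I_n => (i:nat))). Qed.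

Lemma maxB_mem B : B \in P -> exists2 i, i \in B & (i : nat) = maxB B.
Proof.
move=> hB.
have hc : 0 < #|B|.
  rewrite card_gt0; apply: contraNneq P_nz => <-; done.
have [i hi e] := eq_bigmax_cond (fun i : 'I_n => (i : nat)) hc.
by exists i => //; rewrite /maxB e.
Qed.

Lemma maxB_lt B : B \in P -> maxB B < n.
Proof. by move=> /maxB_mem[i _ <-]. Qed.

Lemma P_disj B C i : B \in P -> C \in P -> i \in B -> i \in C -> B = C.
Proof.
move=> hB hC hiB hiC; apply/eqP; apply: contraTT isT => ne.
by move: (trivIsetP P_triv B C hB hC ne) => /disjointFr /(_ hiB); rewrite hiC.
Qed.

Lemma P_in i : exists2 B, B \in P & i \in B.
Proof. have : i \in cover P by rewrite P_cover inE. by move/bigcupP. Qed.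

Lemma maxB_inj : {in P &, injective (@maxB n)}.
Proof.
move=> B C hB hC e.
have [i hi ei] := maxB_mem hB; have [i' hi' ei'] := maxB_mem hC.
have ii : i = i' by apply: val_inj; rewrite /= ei ei'.
by apply: P_disj hB hC hi _; rewrite ii.
Qed.

Definition rk (B : {set 'I_n}) := blockrank P B.

Lemma rk_ge1 B : B \in P -> 0 < rk B.
Proof. move=> hB; rewrite /rk /blockrank; apply/card_gt0P; exists B; by rewrite inE hB leqnn. Qed.

Lemma rk_le B : rk B <= #|P|.
Proof. rewrite /rk /blockrank; apply: subset_leq_card; apply/subsetP => C; rewrite inE; by case/andP. Qed.

Lemma cnt_le x : cnt P x <= #|P|.
Proof. apply: subset_leq_card; apply/subsetP => C; rewrite inE; by case/andP. Qed.

Lemma cnt_mono x y : x <= y -> cnt P y <= cnt P x.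
Proof.
move=> xy; apply: subset_leq_card; apply/subsetP => C; rewrite !inE.
case/andP => -> /=; lia.
Qed.

Lemma rk_lt B C : B \in P -> C \in P -> maxB B < maxB C -> rk C < rk B.
Proof.
move=> hB hC hlt; rewrite /rk /blockrank; apply: proper_card; rewrite properE; apply/andP; split.
- apply/subsetP => D; rewrite !inE => /andP[-> /=]; lia.
- apply/subsetP => /(_ B); rewrite !inE hB leqnn /=; move=> /(_ isT); lia.
Qed.

Lemma rk_inj : {in P &, injective rk}.
Proof.
move=> B C hB hC e; case: (ltngtP (maxB B) (maxB C)) => h.
- by have := rk_lt hB hC h; rewrite e ltnn.
- by have := rk_lt hC hB h; rewrite e ltnn.
- exact: maxB_inj.
Qed.

Lemma rk_surj l : 1 <= l <= #|P| -> exists2 B, B \in P & rk B = l.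
Proof.
move=> hl.
have U : uniq (map rk (enum P)) by rewrite map_inj_in_uniq ?enum_uniq // => x y; rewrite !mem_enum; exact: rk_inj.
have S : {subset map rk (enum P) <= iota 1 #|P|}.
  move=> x /mapP[B]; rewrite mem_enum => hB ->; rewrite mem_iota.
  have := rk_ge1 hB; have := rk_le B; lia.
have [_ E] := uniq_min_size U S (ltac:(by rewrite size_iota size_map -cardE)).
have : l \in iota 1 #|P| by rewrite mem_iota; lia.
by rewrite -E => /mapP[B]; rewrite mem_enum => hB ->; exists B.
Qed.

Lemma card_P_le : #|P| <= n.
Proof.
have := P_triv; rewrite /trivIset P_cover cardsT card_ord => /eqP e.
rewrite -[X in _ <= X]e -sum1_card; apply: leq_sum => B hB; rewrite lt0n cards_eq0.
by apply: contraNneq P_nz => <-.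
Qed.

Section Rank.
Variables (B0 : {set 'I_n}) (l : nat).
Hypothesis hB0 : B0 \in P.
Hypothesis hrk : rk B0 = l.

Lemma rank_cnt x : (l <= cnt P x) = (x < maxB B0).
Proof.
apply/idP/idP => h.
- rewrite ltnNge; apply/negP => hle; move: h; rewrite -hrk.
  suff : cnt P x < rk B0 by lia.
  rewrite /rk /blockrank (cardsD1 B0) inE hB0 leqnn /=.
  rewrite ltnS; apply: subset_leq_card; apply/subsetP => C; rewrite !inE.
  move=> /andP[hC hx]; rewrite hC /=.
  have ne : C != B0 by apply: contraTneq hx => ->; lia.
  rewrite ne /=; lia.
- rewrite -hrk /rk /blockrank; apply: subset_leq_card; apply/subsetP => C; rewrite !inE.
  move=> /andP[-> /=]; lia.
Qed.

Lemma cnt_b : cnt P (maxB B0) = l.-1.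
Proof.
rewrite -hrk /rk /blockrank (cardsD1 B0) inE hB0 leqnn /=.
apply: eq_card => C; rewrite !inE.
case: (eqVneq C B0) => [->|hne] /=; first by rewrite ltnn andbF.
case hC: (C \in P) => //=.
case: (eqVneq (maxB B0) (maxB C)) => e; last by rewrite ltn_neqAle e.
by case/eqP: hne; apply: maxB_inj.
Qed.

Lemma arc_not_max y : arcN P y -> y.1 != maxB B0.
Proof.
rewrite /arcN => /existsP[[u v] /andP[/andP[/= huv /existsP[B /and4P[hB hu hv _]]] /eqP <-]] /=.
apply/eqP => e.
have [z hz ez] := maxB_mem hB0.
have uz : u = z by apply: val_inj; rewrite /= e ez.
subst z.
have eB := P_disj hB hB0 hu hz; subst B.
have := leq_maxB hv; lia.
Qed.

End Rank.
End Part.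

Section Gen.
Variable n : nat.

Definition w : 'I_n -> 'I_n.+1 := widen_ord (leqnSn n).
Lemma w_inj : injective w.
Proof. by move=> i j /(congr1 val) /= /val_inj. Qed.

Lemma liftB_mem (B : {set 'I_n}) i : (w i \in liftB B) = (i \in B).
Proof. exact: mem_imset w_inj. Qed.

Lemma max_notin (B : {set 'I_n}) : (@ord_max n) \notin liftB B.
Proof.
apply/imsetP => [[i _ /(congr1 val) /= e]]; have := ltn_ord i; rewrite -e; lia.
Qed.

Lemma ord_split (i : 'I_n.+1) : i = ord_max \/ exists i', i = w i'.
Proof.
case: (ltngtP i n) => h.
- by right; exists (Ordinal h); apply: val_inj.
- by have := ltn_ord i; lia.
- by left; apply: val_inj.
Qed.

Lemma maxB_liftB (B : {set 'I_n}) : maxB (liftB B) = maxB B.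
Proof. rewrite /maxB /liftB big_imset //; by move=> x y _ _ /w_inj. Qed.

Lemma maxB_le (B : {set 'I_n}) : maxB B <= n.
Proof. apply/bigmax_leqP => i _; exact: ltnW. Qed.

Lemma maxB_mem' (B : {set 'I_n}) : B != set0 -> exists2 i, i \in B & (i : nat) = maxB B.
Proof.
move=> hB.
have hc : 0 < #|B| by rewrite card_gt0.
have [i hi e] := eq_bigmax_cond (fun i : 'I_n => (i : nat)) hc.
by exists i => //; rewrite /maxB e.
Qed.

Lemma leq_maxB' (B : {set 'I_n}) i : i \in B -> i <= maxB B.
Proof. by move=> hi; apply: (@leq_bigmax_cond _ (fun i => i \in B) (fun i : 'I_n => (i:nat))). Qed.

Variables (R : {set {set 'I_n}}) (B1 : {set 'I_n}).
Hypothesis hdisj : forall B C i, B \in R -> C \in R -> i \in B -> i \in C -> B = C.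
Hypothesis hB1 : B1 \in R.

Definition G (B : {set 'I_n}) : {set 'I_n.+1} :=
  if B == B1 then ord_max |: liftB B else liftB B.

Lemma G_mem B i : (w i \in G B) = (i \in B).
Proof.
rewrite /G; case: ifP => _; rewrite ?in_setU1 liftB_mem //.
have -> : (w i == ord_max) = false by apply/negbTE/eqP => /(congr1 val) /=; have := ltn_ord i; lia.
done.
Qed.

Lemma G_max B : (ord_max \in G B) = (B == B1).
Proof.
rewrite /G; case: ifP => _; first by rewrite in_setU1 eqxx.
exact/negbTE/max_notin.
Qed.

Lemma G_inj : injective G.
Proof. move=> B C e; apply/setP => i; by rewrite -!G_mem e. Qed.

Lemma maxB_G B : maxB (G B) = if B == B1 then n else maxB B.
Proof.
rewrite /G; case: ifP => _; last exact: maxB_liftB.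
rewrite /maxB big_setU1 /=; last exact: max_notin.
have := maxB_le B; rewrite -maxB_liftB /maxB => h; exact/maxn_idPl.
Qed.

Lemma arcN_G y : arcN (G @: R) y = arcN R y || ((B1 != set0) && (y == (maxB B1, n))).
Proof.
apply/idP/idP.
- rewrite {1}/arcN => /existsP[[u v] /andP[harc /eqP <-]].
  move: harc => /andP[/= huv /existsP[C /and4P[/imsetP[B hB ->] hu hv hbt]]].
  case: (ord_split v) => [ev|[v' ev]]; subst v.
  + move: hv; rewrite G_max => /eqP eB; subst B.
    case: (ord_split u) => [eu|[u' eu]]; subst u; first by rewrite ltnn in huv.
    move: hu; rewrite G_mem => hu.
    have ne : B1 != set0 by apply/set0Pn; exists u'.
    have [z hz ez] := maxB_mem' ne.
    apply/orP; right; rewrite ne /= /fN /=.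
    have : w z \in G B1 by rewrite G_mem.
    move/forallP: hbt => /(_ (w z)) /implyP hh /hh.
    have := leq_maxB' hu; rewrite -ez /= => h1 h2.
    apply/eqP; congr pair; have := ltn_ord z; lia.
  + case: (ord_split u) => [eu|[u' eu]]; subst u.
      by move: huv => /=; have := ltn_ord v'; lia.
    move: hu hv; rewrite !G_mem => hu hv.
    apply/orP; left; rewrite /arcN; apply/existsP; exists (u', v').
    rewrite /fN /= eqxx andbT /arcb /= huv /=; apply/existsP; exists B.
    rewrite hB hu hv /=; apply/forallP => z; apply/implyP => hz.
    by move/forallP: hbt => /(_ (w z)) /implyP; rewrite G_mem => /(_ hz).
- case/orP.
  + rewrite {1}/arcN => /existsP[[u v] /andP[harc /eqP <-]].
    move: harc => /andP[/= huv /existsP[B /and4P[hB hu hv hbt]]].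
    rewrite /arcN; apply/existsP; exists (w u, w v); rewrite /fN /= eqxx andbT.
    rewrite /arcb /= huv /=; apply/existsP; exists (G B).
    rewrite imset_f // !G_mem hu hv /=; apply/forallP => z; apply/implyP.
    case: (ord_split z) => [->|[z' ->]].
      by rewrite /=; have := ltn_ord v; lia.
    by rewrite G_mem => hz; move/forallP: hbt => /(_ z') /implyP /(_ hz).
  + move=> /andP[ne /eqP ->].
    have [z hz ez] := maxB_mem' ne.
    rewrite /arcN; apply/existsP; exists (w z, ord_max); rewrite /fN /= ez eqxx andbT.
    rewrite /arcb /=; apply/andP; split; first exact: ltn_ord.
    apply/existsP; exists (G B1); rewrite imset_f // G_mem hz G_max eqxx /=.
    apply/forallP => x; apply/implyP.
    case: (ord_split x) => [->|[x' ->]]; first by rewrite ltnn andbF.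
    rewrite G_mem => hx; have := leq_maxB' hx; rewrite /= ez; lia.
Qed.

Lemma part_G : cover R = [set: 'I_n] -> (forall B, B \in R -> B != B1 -> B != set0) ->
  partition (G @: R) [set: 'I_n.+1].
Proof.
move=> hcov hnz; apply/and3P; split.
- apply/eqP/setP => i; rewrite inE; apply/bigcupP.
  case: (ord_split i) => [->|[i' ->]].
    by exists (G B1); rewrite ?imset_f ?G_max.
  have : i' \in cover R by rewrite hcov inE.
  move/bigcupP => [B hB hi]; exists (G B); by rewrite ?imset_f ?G_mem.
- apply/trivIsetP => C D /imsetP[B hB ->] /imsetP[B' hB' ->] ne.
  rewrite -setI_eq0; apply/eqP/setP => i; rewrite !inE.
  case: (ord_split i) => [->|[i' ->]].
    rewrite !G_max; apply/negbTE; apply: contra ne => /andP[/eqP -> /eqP ->] //.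
  rewrite !G_mem; apply/negbTE; apply: contra ne => /andP[h1 h2].
  by rewrite (hdisj hB hB' h1 h2).
- apply/imsetP => [[B hB e]].
  case: (eqVneq B B1) => [eB|ne].
    by have := G_max B; rewrite -e inE eB eqxx.
  have [i hi] := set0Pn _ (hnz B hB ne).
  by have := G_mem B i; rewrite -e inE hi.
Qed.

Lemma card_G : #|G @: R| = #|R|.
Proof. apply: card_imset; exact: G_inj. Qed.

Lemma cnt_G x : x < n ->
  cnt (G @: R) x = cnt R x + (B1 \notin [set B in R | x < maxB B]).
Proof.
move=> hx; rewrite /cnt.
have -> : [set C in G @: R | x < maxB C] = G @: [set B in R | x < maxB (G B)].
  apply/setP => C; rewrite inE; apply/andP/imsetP.
  - move=> [/imsetP[B hB ->] h]; exists B => //; by rewrite inE hB.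
  - move=> [B]; rewrite inE => /andP[hB h] ->; by rewrite imset_f.
rewrite (card_imset _ G_inj).
have -> : [set B in R | x < maxB (G B)] = B1 |: [set B in R | x < maxB B].
  apply/setP => B; rewrite in_setU1 !inE maxB_G.
  case: (eqVneq B B1) => [->|]; by rewrite ?hB1 ?hx.
by rewrite cardsU1 addnC.
Qed.

End Gen.

Lemma isStart_eqA (A A' : pred (nat*nat)) j x : A =1 A' -> isStart A j x -> isStart A' j x.
Proof. move=> e [s [h1 h2 h3 h4]]; exists s; split => //; by rewrite -(eq_all e). Qed.

Lemma LabR_eqA (A A' : pred (nat*nat)) c t j v : A =1 A' -> LabR A c t j v -> LabR A' c t j v.
Proof.
move=> e [[x [hx hm ->]]|[hn ->]].
- left; exists x; split => //; first exact: isStart_eqA hx.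
  move=> y /(isStart_eqA (A' := A)) h; apply: hm; apply: h => z; by rewrite e.
- right; split => // x /(isStart_eqA (A' := A)) h; apply: (hn x); apply: h => z; by rewrite e.
Qed.

Section Inst.
Variable n : nat.
Variable P : {set {set 'I_n}}.
Hypothesis hP : setpart P.

Lemma P_nz' B : B \in P -> B != set0.
Proof. by move=> hB; apply: contraNneq (P_nz hP) => <-. Qed.

Section AddTo.
Variables (B0 : {set 'I_n}) (l : nat).
Hypothesis hB0 : B0 \in P.
Hypothesis hrk : rk P B0 = l.

Lemma add_to_G : add_to P l = G B0 @: P.
Proof.
rewrite /add_to; apply: eq_in_imset => B hB; rewrite /G.
have -> : (blockrank P B == l) = (B == B0); last by [].
apply/eqP/eqP => [e|->]; last exact: hrk.
by apply: (rk_inj hP) => //; rewrite /rk e -hrk.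
Qed.

Lemma add_to_part : setpart (add_to P l).
Proof.
rewrite /setpart add_to_G; apply: part_G.
- move=> B C i hB hC hiB hiC; exact: (P_disj hP hB hC hiB hiC).
- exact: hB0.
- exact: P_cover.
- by move=> B hB _; apply: P_nz'.
Qed.

Lemma add_to_arc y : arcN (add_to P l) y = arcN P y || (y == (maxB B0, n)).
Proof. by rewrite add_to_G arcN_G // P_nz'. Qed.

Lemma add_to_cnt x : x < n -> cnt (add_to P l) x = cnt P x + (maxB B0 <= x).
Proof. by move=> hx; rewrite add_to_G cnt_G // inE hB0 /= -leqNgt. Qed.

Lemma add_to_card : #|add_to P l| = #|P|.
Proof. by rewrite add_to_G card_G. Qed.

Lemma add_to_lab j aj1 : 0 < j -> (1 < j -> aj1 = lab P j.-1) ->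
  lab (add_to P l) j =
    (if lab P j <= l then (lab P j).+1
     else if (j == 1) || (aj1 <= l) then l.+1 else lab P j).
Proof.
move=> hj haj1.
apply: (LabR_uniq (labP (add_to P l) hj)); rewrite add_to_card.
apply: (labR_ext (A := arcN P) (cnt := cnt P) (c := n) (b := maxB B0)).
- exact: arcN_lt.
- move=> y hy; exact: (arc_not_max hP hB0 hrk hy).
- exact: add_to_arc.
- exact: (maxB_lt hP hB0).
- exact: add_to_cnt.
- exact: (rank_cnt hP hB0 hrk).
- exact: (cnt_b hP hB0 hrk).
- by rewrite -hrk; apply: rk_ge1.
- by rewrite -hrk; apply: rk_le.
- exact: hj.
- exact: labP.
- by move=> h1; rewrite haj1 //; apply: labP; lia.
Qed.

Lemma add_to_has m : 0 < m -> ~~ has_nesting P m.+1 ->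
  has_nesting (add_to P l) m.+1 = (lab P m <= l).
Proof.
move=> hm hn.
have EH : (exists x, isStart (arcN (add_to P l)) m.+1 x) <-> lab P m <= l.
  apply: (ext_has (A := arcN P) (c := n) (b := maxB B0) (cnt := cnt P) (tot := #|P|)).
  - exact: arcN_lt.
  - move=> y hy; exact: (arc_not_max hP hB0 hrk hy).
  - exact: add_to_arc.
  - exact: (maxB_lt hP hB0).
  - exact: (rank_cnt hP hB0 hrk).
  - exact: (cnt_b hP hB0 hrk).
  - by rewrite -hrk; apply: rk_ge1.
  - by rewrite -hrk; apply: rk_le.
  - exact: hm.
  - by move=> x hx'; move: hn => /negP; apply; apply/has_nestingP => //; exists x.
  - exact: labP.
apply/idP/idP => [/(has_nestingP _ (ltn0Sn m)) /EH //| /EH h].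
exact/(has_nestingP _ (ltn0Sn m)).
Qed.

End AddTo.

Lemma add_single_G : add_single P = G set0 @: (set0 |: P).
Proof.
rewrite imsetU1 /add_single; congr setU.
- by rewrite /G eqxx /liftB imset0 setU0.
- apply: eq_in_imset => B hB; by rewrite /G (negbTE (P_nz' hB)).
Qed.

Lemma arcb_set0 (a : 'I_n * 'I_n) : arcb (set0 |: P) a = arcb P a.
Proof.
rewrite /arcb; congr andb; apply/existsP/existsP => [[B]|[B]].
- rewrite in_setU1 => /andP[/orP[/eqP ->|hB] h]; first by rewrite inE in h.
  by exists B; rewrite hB.
- move=> /andP[hB h]; exists B; by rewrite in_setU1 hB orbT.
Qed.

Lemma add_single_part : setpart (add_single P).
Proof.
rewrite /setpart add_single_G; apply: part_G.
- move=> B C i; rewrite !in_setU1 => /orP[/eqP->|hB]; first by rewrite inE.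
  move=> /orP[/eqP->|hC]; first by move=> _; rewrite inE.
  by move=> hiB hiC; exact: (P_disj hP hB hC hiB hiC).
- by rewrite in_setU1 eqxx.
- apply/setP => i; rewrite inE; apply/bigcupP.
  have [B hB hi] := P_in hP i; exists B => //; by rewrite in_setU1 hB orbT.
- move=> B; rewrite in_setU1 => /orP[/eqP->|hB]; first by rewrite eqxx.
  by move=> _; apply: P_nz'.
Qed.

Lemma add_single_arc : arcN (add_single P) =1 arcN P.
Proof.
move=> y; have h1 : (set0 : {set 'I_n}) \in set0 |: P by rewrite in_setU1 eqxx.
rewrite add_single_G (arcN_G h1) eqxx /= orbF /arcN; apply: eq_existsb => a; by rewrite arcb_set0.
Qed.

Lemma add_single_cnt x : x < n -> cnt (add_single P) x = (cnt P x).+1.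
Proof.
move=> hx; have h1 : (set0 : {set 'I_n}) \in set0 |: P by rewrite in_setU1 eqxx.
rewrite add_single_G (cnt_G h1 hx).
have m0 : maxB (set0 : {set 'I_n}) = 0.
  by apply/eqP; rewrite -leqn0; apply/bigmax_leqP => i; rewrite inE.
rewrite !inE m0 /= andbF /= addn1; congr S.
rewrite /cnt; apply: eq_card => B; rewrite !inE.
case: (eqVneq B set0) => [->|ne] //=; by rewrite m0 (negbTE (P_nz hP)).
Qed.

Lemma add_single_card : #|add_single P| = #|P|.+1.
Proof.
rewrite add_single_G card_G ?in_setU1 ?eqxx // (cardsU1 set0 P) (P_nz hP). by rewrite add1n.
Qed.

Lemma add_single_lab j : 0 < j -> lab (add_single P) j = (lab P j).+1.
Proof.
move=> hj; apply: (LabR_uniq (labP (add_single P) hj)); rewrite add_single_card.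
apply: (LabR_eqA (A := arcN P)); first by move=> y; rewrite add_single_arc.
apply: (labR_single (c := n)) => //; [exact: arcN_lt | exact: add_single_cnt | exact: labP].
Qed.

Lemma add_single_has j : 0 < j -> has_nesting (add_single P) j = has_nesting P j.
Proof.
move=> hj; apply/(has_nestingP _ hj)/(has_nestingP _ hj) => [[x hx]|[x hx]]; exists x.
- apply: isStart_eqA hx => y; exact: add_single_arc.
- apply: isStart_eqA hx => y; by rewrite add_single_arc.
Qed.

End Inst.

Lemma card_range N a : a <= N -> #|[set l : 'I_N | 0 < l < a]| = a.-1.
Proof.
move=> ha; rewrite cardsE cardE /enum_mem size_filter.
rewrite -(@count_map _ _ (@nat_of_ord N) (fun i => 0 < i < a)).
have e : enum 'I_N = Finite.enum 'I_N by exact: filter_predT.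
rewrite -e val_enum_ord.
rewrite -(subnKC ha) iotaD count_cat add0n.
have -> : count (fun i => 0 < i < a) (iota a (N - a)) = 0.
  rewrite (eq_in_count (a2 := pred0)) ?count_pred0 //.
  by move=> x; rewrite mem_iota /=; lia.
rewrite addn0; case: a {ha e} => [|a] //=.
rewrite (eq_in_count (a2 := predT)) ?count_predT ?size_iota //.
by move=> x; rewrite mem_iota /=; lia.
Qed.

Lemma map_iota_split (f : nat -> nat) m j : 1 <= j <= m ->
  map f (iota 1 m) = map f (iota 1 j.-1) ++ f j :: map f (iota j.+1 (m - j)).
Proof.
move=> hj; have e : m = j.-1 + (m - j).+1 by lia.
rewrite {1}e iotaD map_cat; congr (_ ++ _).
have -> : 1 + j.-1 = j by lia.
by [].
Qed.

Section Main.
Variables (m n : nat) (P : {set {set 'I_n}}).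
Hypothesis hm : 1 <= m.
Hypothesis hPi : PiM m P.

Lemma hP : setpart P.
Proof. by case/andP: hPi. Qed.
Lemma hn : ~~ has_nesting P m.+1.
Proof. by case/andP: hPi. Qed.

Lemma nth_a j : j < m -> nth 0 (label m P) j = lab P j.+1.
Proof. by move=> hj; rewrite /label (nth_map 0) ?size_iota // nth_iota. Qed.

Lemma lab_mono i j : 0 < i -> i <= j -> lab P i <= lab P j.
Proof.
move=> hi; elim: j => [|j IH] hij; first by lia.
case: (eqVneq i j.+1) => [->//|ne].
have h1 := IH (ltac:(lia)).
have h2 : lab P j <= lab P j.+1.
  exact: (labR_mono (fun x y => @cnt_mono n P hP x y) (cnt_le P) (ltac:(lia) : 1 < j.+1) (labP P (ltn0Sn j)) (labP P (ltac:(lia) : 0 < j))).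
lia.
Qed.

Lemma lab_bounds j : 0 < j -> 0 < lab P j <= #|P|.+1.
Proof.
move=> hj; case: (labP P hj) => [[x [_ _ ->]]|[_ ->]]; last by lia.
have := cnt_le P x; lia.
Qed.

Lemma rk_of l : 1 <= l <= #|P| -> exists2 B0, B0 \in P & rk P B0 = l.
Proof. move=> hl; exact: (rk_surj hP hl). Qed.

Lemma PiM_add_to l : 1 <= l <= #|P| -> PiM m (add_to P l) = (l < lab P m).
Proof.
move=> hl; have [B0 hB0 hrk] := rk_of hl.
rewrite /PiM (add_to_part hP hB0 hrk) (add_to_has hP hB0 hrk hm hn) /=.
by rewrite ltnNge.
Qed.

Lemma lab_add_to l j : 1 <= l <= #|P| -> 0 < j ->
  lab (add_to P l) j =
    (if lab P j <= l then (lab P j).+1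
     else if (j == 1) || (lab P j.-1 <= l) then l.+1 else lab P j).
Proof.
move=> hl hj; have [B0 hB0 hrk] := rk_of hl.
by apply: (add_to_lab hP hB0 hrk hj).
Qed.

Lemma add_to_inj l l' : 1 <= l <= #|P| -> 1 <= l' <= #|P| ->
  add_to P l = add_to P l' -> l = l'.
Proof.
move=> hl hl'; have [B0 hB0 hrk] := rk_of hl; have [B1 hB1 hrk1] := rk_of hl'.
rewrite (add_to_G hP hB0 hrk) (add_to_G hP hB1 hrk1) => e.
have : G B0 B0 \in G B1 @: P by rewrite -e imset_f.
move=> /imsetP[B hB eB].
have : (@ord_max n) \in G B1 B by rewrite -eB G_max.
rewrite G_max => /eqP eBB; subst B.
have eq : B0 = B1.
  by apply/setP => i; rewrite -(G_mem hB0 B0 i) -(G_mem hB1 B1 i) eB.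
by rewrite -hrk -hrk1 eq.
Qed.

Lemma children_card : #|[set Q in children P | PiM m Q]| = lab P m.
Proof.
pose T := [set add_to P (nat_of_ord l) | l in [set l : 'I_n.+1 | 0 < l < lab P m]].
have hb := lab_bounds (ltac:(lia) : 0 < m).
have hPn := card_P_le hP.
have -> : [set Q in children P | PiM m Q] = add_single P |: T.
  apply/setP => Q; rewrite !inE.
  case: (eqVneq Q (add_single P)) => [->|ne] /=.
    by rewrite /PiM (add_single_part hP) (add_single_has hP (ltn0Sn m)) hn.
  apply/andP/imsetP.
  - move=> [/imsetP[l]]; rewrite inE => hl -> hpi.
    exists l; rewrite // inE.
    by rewrite PiM_add_to // in hpi; lia.
  - move=> [l]; rewrite inE => hl ->; split.
      apply/imsetP; exists l => //; rewrite inE. move: hl hb => /andP[h1 h2] /andP[h3 h4]; rewrite h1 /= -ltnS; exact: leq_trans h2 h4.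
    by rewrite PiM_add_to //; lia.
rewrite cardsU1.
have -> : add_single P \notin T.
  apply/imsetP => [[l]]; rewrite inE => /andP[hl1 hl2] e.
  have hl : 1 <= l <= #|P|.
    rewrite hl1 /= -ltnS; case/andP: hb => _ hb2; exact: leq_trans hl2 hb2.
  have [B0 hB0 hrk] := rk_of hl.
  have := add_single_card hP; rewrite e (add_to_card hP hB0 hrk) => h.
  by move: h; lia.
rewrite card_in_imset; last first.
  move=> x y; rewrite !inE => /andP[hx1 hx2] /andP[hy1 hy2] /add_to_inj h.
  case/andP: hb => _ hb2.
  apply/val_inj; apply: h.
  - rewrite hx1 /= -ltnS; exact: leq_trans hx2 hb2.
  - rewrite hy1 /= -ltnS; exact: leq_trans hy2 hb2.
rewrite card_range; last by case/andP: hb => _ hb2; exact: leq_trans hb2 _.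
by case/andP: hb => hb1 _; rewrite add1n prednK.
Qed.

Lemma label_single : label m (add_single P) = [seq x.+1 | x <- label m P].
Proof.
rewrite /label -map_comp; apply/eq_in_map => j; rewrite mem_iota => hj.
by rewrite /= (add_single_lab hP); lia.
Qed.

Lemma label_first l : 1 <= l <= (nth 0 (label m P) 0).-1 ->
  label m (add_to P l) = l.+1 :: behead (label m P).
Proof.
rewrite nth_a // => hl.
have hb1 := lab_bounds (ltn0Sn 0).
have hl' : 1 <= l <= #|P| by lia.
rewrite /label; case: m hm => [|m'] //= _.
rewrite (lab_add_to hl' (ltn0Sn 0)).
have -> : (lab P 1 <= l) = false by lia.
rewrite eqxx /=; congr cons.
apply/eq_in_map => j; rewrite mem_iota => hj.
have h1 := lab_mono (ltn0Sn 0) (ltac:(lia) : 1 <= j).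
have h2 := lab_mono (ltn0Sn 0) (ltac:(lia) : 1 <= j.-1).
rewrite (lab_add_to hl' (ltac:(lia) : 0 < j)).
have -> : (lab P j <= l) = false by lia.
have -> : (j == 1) = false by lia.
have -> : (lab P j.-1 <= l) = false by lia.
by [].
Qed.

Lemma label_mid j l : 2 <= j <= m ->
  nth 0 (label m P) j.-2 <= l <= (nth 0 (label m P) j.-1).-1 ->
  label m (add_to P l) =
    [seq x.+1 | x <- take j.-1 (label m P)] ++ l.+1 :: drop j (label m P).
Proof.
move=> hj; rewrite !nth_a; try lia.
have -> : j.-2.+1 = j.-1 by lia.
have -> : j.-1.+1 = j by lia.
move=> hl.
have hb := lab_bounds (ltac:(lia) : 0 < j).
have hb' := lab_bounds (ltac:(lia) : 0 < j.-1).
have hl' : 1 <= l <= #|P| by lia.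
have hj' : 1 <= j <= m by lia.
rewrite /label !(map_iota_split _ hj').
have sz : size [seq lab P i | i <- iota 1 j.-1] = j.-1 by rewrite size_map size_iota.
rewrite take_size_cat // drop_cat sz.
have -> : (j < j.-1) = false by lia.
have -> : j - j.-1 = 1 by lia.
rewrite /= drop0 -map_comp.
congr (_ ++ _ :: _).
- apply/eq_in_map => i; rewrite mem_iota => hi /=.
  have h1 := lab_mono (ltac:(lia) : 0 < i) (ltac:(lia) : i <= j.-1).
  rewrite (lab_add_to hl' (ltac:(lia) : 0 < i)).
  by have -> : (lab P i <= l) by lia.
- rewrite (lab_add_to hl' (ltac:(lia) : 0 < j)).
  have -> : (lab P j <= l) = false by lia.
  have -> : (lab P j.-1 <= l) by lia.
  by rewrite orbT.
- apply/eq_in_map => i; rewrite mem_iota => hi /=.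
  have h1 := lab_mono (ltac:(lia) : 0 < j) (ltac:(lia) : j <= i).
  have h2 := lab_mono (ltac:(lia) : 0 < j) (ltac:(lia) : j <= i.-1).
  rewrite (lab_add_to hl' (ltac:(lia) : 0 < i)).
  have -> : (lab P i <= l) = false by lia.
  have -> : (i == 1) = false by lia.
  have -> : (lab P i.-1 <= l) = false by lia.
  by [].
Qed.

End Main.

Unset Implicit Arguments.
Theorem proposition1 (m n : nat) (P : {set {set 'I_n}}) :
  1 <= m -> PiM m P ->
  let a := label m P in
  #|[set Q in children P | PiM m Q]| = nth 0 a m.-1 /\
  PiM m (add_single P) /\
  (forall l : nat, 1 <= l <= #|P| ->
     PiM m (add_to P l) = (l <= (nth 0 a m.-1).-1)) /\
  label m (add_single P) = [seq x.+1 | x <- a] /\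
  (forall l : nat, 1 <= l <= (nth 0 a 0).-1 ->
     label m (add_to P l) = l.+1 :: behead a) /\
  (forall (j l : nat), 2 <= j <= m ->
     nth 0 a (j.-2) <= l <= (nth 0 a j.-1).-1 ->
     label m (add_to P l) =
       [seq x.+1 | x <- take j.-1 a] ++ l.+1 :: drop j a).
Proof.
move=> hm hPi a; subst a.
have hPP := hP hPi.
have em : nth 0 (label m P) m.-1 = lab P m.
  by rewrite (nth_a P (ltac:(lia) : m.-1 < m)) prednK.
rewrite em; split; first exact: (children_card hm hPi).
split.
  by rewrite /PiM (add_single_part hPP) (add_single_has hPP (ltn0Sn m)) (hn hPi).
split.
  move=> l hl; rewrite (PiM_add_to hm hPi hl).
  have := lab_bounds hm hPi (ltac:(lia) : 0 < m).
  by case: (lab P m) => [|x] //= _; rewrite ltnS.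
split; first exact: (label_single hm hPi).
split; first exact: (label_first hm hPi).
move=> j l; exact: (label_mid hm hPi).
Qed.
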